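(* Let $f,f',g\in\mathbb{S}(\mathcal{H})$ with $f\ne-g$, $f'\ne-g$ and $d_{\mathbb{S}}(f,g)\le\frac\pi2$. Let $f_t=\Gamma(g,f,t)$ and $f'_t=\Gamma(g,f',t)$. Then $d_{\mathbb{S}}(f_t,f'_t)\le 2\,d_{\mathbb{S}}(f,f')$ for every $t\in[0,1]$.
   Context: $\mathcal{H}$ is a finite-dimensional complex Hermitian space (in the paper, the space of polynomial systems $H_{d_1}\times\dots\times H_{d_n}$ with the Weyl inner product), $\mathbb{S}(\mathcal{H})$ its unit sphere with the angular distance $d_{\mathbb{S}}(x,y)\in[0,\pi]$, $\cos d_{\mathbb{S}}(x,y)=\mathrm{Re}\langle x,y\rangle$. For $f\ne-g$ and $\alpha=d_{\mathbb{S}}(f,g)\in[0,\pi)$, $\Gamma(g,f,t)=\frac{\sin((1-t)\alpha)}{\sin\alpha}g+\frac{\sin(t\alpha)}{\sin\alpha}f$ (and $\Gamma(g,f,t)=g$ if $\alpha=0$) is the geodesic from $g$ to $f$. *)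

(* Defs.v *)
(* R : realType, the complex field is R[i] (mathcomp-real-closed),
   the finite-dimensional Hermitian space is C^n = 'rV[R[i]]_n. *)
From HB Require Import structures.
From mathcomp Require Import all_boot all_order all_algebra.
From mathcomp Require Import all_classical all_reals all_analysis.
From mathcomp Require Import complex.
Set Implicit Arguments. Unset Strict Implicit. Unset Printing Implicit Defensive.
Import Order.TTheory GRing.Theory Num.Theory.
Local Open Scope ring_scope.

Section Defs.
Context {R : realType} {n : nat}.
Local Open Scope complex_scope.

Definition hdot (x y : 'rV[R[i]]_n) : R[i] := \sum_(i < n) x ord0 i * (y ord0 i)^*.

Definition on_sphere (x : 'rV[R[i]]_n) : Prop := complex.Re (hdot x x) = 1.

Definition dS (x y : 'rV[R[i]]_n) : R := acos (complex.Re (hdot x y)).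

Definition Gamma (g f : 'rV[R[i]]_n) (t : R) : 'rV[R[i]]_n :=
  let a := dS f g in
  if a == 0 then g
  else ((sin ((1 - t) * a) / sin a)%:C *: g + (sin (t * a) / sin a)%:C *: f).
End Defs.

(* Main.v *)
Require Import Defs.
From HB Require Import structures.
From mathcomp Require Import all_boot all_order all_algebra.
From mathcomp Require Import all_classical all_reals all_analysis.
From mathcomp Require Import complex.
From mathcomp Require Import ring lra.
Import Order.TTheory GRing.Theory Num.Theory.
Local Open Scope ring_scope.
Set Implicit Arguments. Unset Strict Implicit.

Definition ip {R : realType} {n : nat} (x y : 'rV[R[i]]_n) : R := complex.Re (hdot x y).

Lemma Re_mulJ (R : realType) (x y : R[i]) :
  complex.Re (x * (y^*)%C) = complex.Re x * complex.Re y + complex.Im x * complex.Im y.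
Proof. by case: x => a b; case: y => c d /=; ring. Qed.

Lemma ipE (R : realType) (n : nat) (x y : 'rV[R[i]]_n) :
  ip x y = \sum_(j < n) (complex.Re (x ord0 j) * complex.Re (y ord0 j)
                        + complex.Im (x ord0 j) * complex.Im (y ord0 j)).
Proof.
rewrite /ip /hdot.
elim/big_rec2: _ => [//|j s z _ <-].
by rewrite -Re_mulJ; case: (x ord0 j * _) => a b; case: z.
Qed.

Lemma ReD (R : realType) (a b : R[i]) : complex.Re (a + b) = complex.Re a + complex.Re b.
Proof. by case: a; case: b. Qed.
Lemma ImD (R : realType) (a b : R[i]) : complex.Im (a + b) = complex.Im a + complex.Im b.
Proof. by case: a; case: b. Qed.
Lemma ReZ (R : realType) (r : R) (a : R[i]) : complex.Re (r%:C%C * a) = r * complex.Re a.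
Proof. by case: a => u v /=; ring. Qed.
Lemma ImZ (R : realType) (r : R) (a : R[i]) : complex.Im (r%:C%C * a) = r * complex.Im a.
Proof. by case: a => u v /=; ring. Qed.

Lemma ipC (R : realType) (n : nat) (x y : 'rV[R[i]]_n) : ip x y = ip y x.
Proof. by rewrite !ipE; apply: eq_bigr => j _; ring. Qed.

Lemma ipDl (R : realType) (n : nat) (x y z : 'rV[R[i]]_n) : ip (x + y) z = ip x z + ip y z.
Proof.
rewrite !ipE -big_split; apply: eq_bigr => j _ /=.
by rewrite !mxE ReD ImD; ring.
Qed.

Lemma ipZl (R : realType) (n : nat) (r : R) (x z : 'rV[R[i]]_n) :
  ip (r%:C%C *: x) z = r * ip x z.
Proof.
rewrite !ipE mulr_sumr; apply: eq_bigr => j _ /=.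
by rewrite !mxE ReZ ImZ; ring.
Qed.

Lemma ipDr (R : realType) (n : nat) (x y z : 'rV[R[i]]_n) : ip z (x + y) = ip z x + ip z y.
Proof. by rewrite ipC ipDl; congr (_ + _); apply: ipC. Qed.

Lemma ipZr (R : realType) (n : nat) (r : R) (x z : 'rV[R[i]]_n) :
  ip z (r%:C%C *: x) = r * ip z x.
Proof. by rewrite ipC ipZl ipC. Qed.

Lemma ip_ge0 (R : realType) (n : nat) (x : 'rV[R[i]]_n) : 0 <= ip x x.
Proof.
rewrite ipE; apply: sumr_ge0 => j _.
by rewrite addr_ge0 // -expr2 sqr_ge0.
Qed.

Lemma ip_eq0 (R : realType) (n : nat) (x : 'rV[R[i]]_n) : ip x x = 0 -> x = 0.
Proof.
rewrite ipE => /eqP; rewrite psumr_eq0; last first.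
  by move=> j _; rewrite addr_ge0 // -expr2 sqr_ge0.
move=> /allP H; apply/rowP => j; rewrite !mxE.
have /H : j \in index_enum 'I_n by rewrite mem_index_enum.
rewrite /= => /eqP; case: (x ord0 j) => a b /= hab.
have ha : a = 0 by nra.
have hb : b = 0 by nra.
by rewrite ha hb.
Qed.
Lemma Lpos (R : realType) (x t : R) : 0 <= x <= pi + pi / 2 -> 0 <= t <= 1 ->
  1 - cos (t * x) <= 2 * (1 - cos x).
Proof.
move=> /andP[x0 x1] /andP[t0 t1]; have pi0 := @pi_gt0 R.
case: (lerP x pi) => hx.
  have hc : cos x <= cos (t * x).
    rewrite leNgt ltr_cos -?leNgt; first nra.
      by rewrite in_itv /=; apply/andP; split; nra.
    by rewrite in_itv /=; apply/andP; split; nra.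
  have := cos_le1 x; lra.
have hc : cos x <= 0.
  have -> : x = (x - pi) + pi by ring.
  rewrite cosDpi oppr_le0 cos_ge0_pihalf //; apply/andP; split; lra.
have := cos_geN1 (t * x); lra.
Qed.

Lemma Lall (R : realType) (x t : R) : - (pi + pi / 2) <= x <= pi + pi / 2 -> 0 <= t <= 1 ->
  1 - cos (t * x) <= 2 * (1 - cos x).
Proof.
move=> /andP[x0 x1] ht; case: (lerP 0 x) => hx.
  by apply: Lpos => //; apply/andP; split.
rewrite -cosN -(cosN x) -mulrN; apply: Lpos => //; apply/andP; split; lra.
Qed.

Lemma final (R : realType) (a b c t : R) : 0 <= a <= pi / 2 -> 0 <= b <= pi ->
  0 <= t <= 1 -> -1 <= c <= 1 ->
  acos (cos (t * a) * cos (t * b) + sin (t * a) * sin (t * b) * c)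
  <= 2 * acos (cos a * cos b + sin a * sin b * c).
Proof.
move=> /andP[a0 a1] /andP[b0 b1] ht /andP[c0 c1]; have pi0 := @pi_gt0 R.
have ht' := ht; move/andP: ht' => [t0 t1].
set X := cos a * cos b + _.
set Y := cos (t * a) * _ + _.
have h1 := @Lall R (a - b) t.
have h2 := @Lall R (a + b) t.
have [] : - (pi + pi / 2) <= a - b <= pi + pi / 2 /\
     - (pi + pi / 2) <= a + b <= pi + pi / 2 by split; apply/andP; split; lra.
move=> /h1 /(_ ht) {}h1 /h2 /(_ ht) {}h2.
rewrite mulrBr cosB in h1; rewrite mulrDr cosD in h2.
rewrite cosB in h1; rewrite cosD in h2.
have hX : 1 - X = (1 + c) / 2 * (1 - cos (a - b)) + (1 - c) / 2 * (1 - cos (a + b)).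
  by rewrite cosB cosD /X; field.
have hY : 1 - Y = (1 + c) / 2 * (1 - cos (t * a - t * b)) + (1 - c) / 2 * (1 - cos (t * a + t * b)).
  by rewrite cosB cosD /Y; field.
have key : 1 - Y <= 2 * (1 - X).
  rewrite hX hY cosB cosD !cosB !cosD.
  have w1 : 0 <= (1 + c) / 2 by lra.
  have w2 : 0 <= (1 - c) / 2 by lra.
  nra.
have bX : -1 <= X <= 1.
  have := cos_le1 (a - b); have := cos_le1 (a + b);
  have := cos_geN1 (a - b); have := cos_geN1 (a + b).
  move=> *; apply/andP; split; nra.
have bY : -1 <= Y <= 1.
  have := cos_le1 (t * a - t * b); have := cos_le1 (t * a + t * b);
  have := cos_geN1 (t * a - t * b); have := cos_geN1 (t * a + t * b).
  move=> *; apply/andP; split; nra.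
have [g0 gpi] : 0 <= acos X /\ acos X <= pi by split; [apply: acos_ge0|apply: acos_lepi].
have [d0 dpi] : 0 <= acos Y /\ acos Y <= pi by split; [apply: acos_ge0|apply: acos_lepi].
have cg : cos (acos X) = X by apply: acosK; rewrite in_itv.
have cd : cos (acos Y) = Y by apply: acosK; rewrite in_itv.
rewrite leNgt; apply/negP => H.
have hlt : cos (acos Y) < cos (2 * acos X).
  rewrite ltr_cos //; rewrite in_itv /=; apply/andP; split; lra.
have c2 : cos (2 * acos X) = 2 * X ^+ 2 - 1.
  have -> : 2 * acos X = acos X + acos X by ring.
  rewrite cosD cg; have := cos2Dsin2 (acos X); rewrite cg; lra.
rewrite cd c2 in hlt.
have Xneg : X < 0 by nra.
have : 0 <= cos (acos X) by apply: cos_ge0_pihalf; apply/andP; split; lra.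
lra.
Qed.

Lemma ip0r (R : realType) (n : nat) (x : 'rV[R[i]]_n) : ip x 0 = 0.
Proof. by rewrite ipE big1 // => j _; rewrite mxE /=; ring. Qed.

Lemma CS (R : realType) (n : nat) (x y : 'rV[R[i]]_n) : (ip x y) ^+ 2 <= ip x x * ip y y.
Proof.
have [y0|yn] := eqVneq (ip y y) 0.
  by rewrite (ip_eq0 y0) !ip0r expr0n mulr0.
have yp : 0 < ip y y by rewrite lt_def yn ip_ge0.
set r := - ip x y / ip y y.
have h := ip_ge0 (x + r%:C%C *: y).
rewrite ipDl !ipDr !ipZl !ipZr (ipC y x) in h.
have h2 := mulr_ge0 (ltW yp) h.
have e : ip y y * (ip x x + r * ip x y + (r * ip x y + r * (r * ip y y)))
   = ip x x * ip y y - ip x y ^+ 2 by rewrite /r; field.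
rewrite e in h2; lra.
Qed.

Lemma unit_bnd (R : realType) (n : nat) (f g : 'rV[R[i]]_n) : ip f f = 1 -> ip g g = 1 ->
  -1 <= ip f g <= 1.
Proof. move=> hf hg; have := CS f g; rewrite hf hg => h; apply/andP; split; nra. Qed.

Lemma unit_eq (R : realType) (n : nat) (f g : 'rV[R[i]]_n) : ip f f = 1 -> ip g g = 1 ->
  ip f g = 1 -> f = g.
Proof.
move=> hf hg h.
have : ip (f + (-1)%:C%C *: g) (f + (-1)%:C%C *: g) = 0.
  rewrite ipDl !ipDr !ipZl !ipZr (ipC g f) hf hg h; ring.
move/ip_eq0; rewrite rmorphN1 scaleN1r => /eqP; rewrite subr_eq0 => /eqP //.
Qed.

Lemma unit_neg (R : realType) (n : nat) (f g : 'rV[R[i]]_n) : ip f f = 1 -> ip g g = 1 ->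
  f != - g -> -1 < ip f g.
Proof.
move=> hf hg hn; have /andP[h1 _] := unit_bnd hf hg.
rewrite lt_def h1 andbT; apply/negP => /eqP h.
have : ip (f + g) (f + g) = 0.
  rewrite ipDl !ipDr (ipC g f) hf hg h; ring.
move/ip_eq0/eqP; rewrite addr_eq0 => h'.
by rewrite h' in hn.
Qed.

Lemma gamma_rep (R : realType) (n : nat) (f g : 'rV[R[i]]_n) (t : R) :
  ip f f = 1 -> ip g g = 1 -> f != - g ->
  exists A B : R, Gamma g f t = A%:C%C *: g + B%:C%C *: f /\
    A + B * ip f g = cos (t * acos (ip f g)) /\
    B * sin (acos (ip f g)) = sin (t * acos (ip f g)) /\
    (acos (ip f g) = 0 -> f = g).
Proof.
move=> hf hg hn.
have hb := unit_bnd hf hg.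
have hl := unit_neg hf hg hn.
have ca : cos (acos (ip f g)) = ip f g by apply: acosK; rewrite in_itv.
have feq : acos (ip f g) = 0 -> f = g.
  by move=> h; apply: unit_eq => //; rewrite -ca h cos0.
rewrite /Gamma /dS -/(ip f g) /=.
case: eqP => [h0|h0].
  exists 1, 0; rewrite rmorph1 rmorph0 scale1r scale0r addr0 h0 mulr0 cos0 sin0.
  split => //; split; [ring|split; [ring|by move=> _; apply: feq]].
set a := acos (ip f g).
have a0 : 0 < a.
  by rewrite lt_def; apply/andP; split; [apply/eqP|apply: acos_ge0].
have api : a < pi by apply: acos_ltpi; move/andP: hb => [_ ->]; rewrite hl.
have sa : 0 < sin a by apply: sin_gt0_pi; rewrite a0 api.
have san : sin a != 0 by rewrite gt_eqF.
exists (sin ((1 - t) * a) / sin a), (sin (t * a) / sin a).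
split => //; split; last split => //.
  have -> : (1 - t) * a = a - t * a by ring.
  rewrite sinB -/a -ca; field => //.
by rewrite divfK.
Qed.

Unset Implicit Arguments.
Theorem lemma2p5 (R : realType) (n : nat) (f f' g : 'rV[R[i]]_n) (t : R) :
  on_sphere f -> on_sphere f' -> on_sphere g ->
  f != - g -> f' != - g ->
  dS f g <= pi / 2 ->
  0 <= t <= 1 ->
  dS (Gamma g f t) (Gamma g f' t) <= 2 * dS f f'.
Proof.
rewrite /on_sphere /dS -!/(ip _ _) => hf hf' hg hn hn' hdist ht.
have [A [B [eG [eA [eB eq1]]]]] := gamma_rep t hf hg hn.
have [A' [B' [eG' [eA' [eB' eq2]]]]] := gamma_rep t hf' hg hn'.
set a := acos (ip f g) in hdist eA eB eq1.
set b := acos (ip f' g) in eA' eB' eq2.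
have hb1 := unit_bnd hf hg.
have hb2 := unit_bnd hf' hg.
have ca : cos a = ip f g by apply: acosK; rewrite in_itv.
have cb : cos b = ip f' g by apply: acosK; rewrite in_itv.
have a0 : 0 <= a by apply: acos_ge0.
have b0 : 0 <= b by apply: acos_ge0.
have bpi : b <= pi by apply: acos_lepi.
have sa0 : 0 <= sin a by apply: sin_ge0_pi; apply/andP; split; lra.
have sb0 : 0 <= sin b by apply: sin_ge0_pi; apply/andP; split; lra.
have hip : ip (Gamma g f t) (Gamma g f' t) =
    (A + B * ip f g) * (A' + B' * ip f' g) + B * B' * (ip f f' - ip f g * ip f' g).
  rewrite eG eG' !ipDl !ipDr !ipZl !ipZr hg (ipC g f'); ring.
rewrite hip eA eA'.
suff [c [hc hcg]] : exists c, -1 <= c <= 1 /\ ip f f' = cos a * cos b + sin a * sin b * c.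
  have -> : B * B' * (ip f f' - ip f g * ip f' g) = (B * sin a) * (B' * sin b) * c.
    rewrite hcg -ca -cb; ring.
  rewrite eB eB' hcg; apply: final => //; apply/andP; split => //.
have [ae|an] := eqVneq a 0.
  have fg := eq1 ae; rewrite ae.
  exists 0; split; first lra.
  by rewrite cos0 sin0 mul1r mul0r mul0r addr0 cb fg ipC.
have [be|bn] := eqVneq b 0.
  have fg := eq2 be; rewrite be.
  exists 0; split; first lra.
  by rewrite cos0 sin0 mulr1 mulr0 addr0 ca fg.
have hl := unit_neg hf' hg hn'.
have bpi' : b < pi by apply: acos_ltpi; move/andP: hb2 => [_ ->]; rewrite hl.
have sa : 0 < sin a.
  apply: sin_gt0_pi; apply/andP; split; [rewrite lt_def an a0 // | ].
  have := @pi_gt0 R; lra.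
have sb : 0 < sin b by apply: sin_gt0_pi; rewrite lt_def bn b0 bpi'.
exists ((ip f f' - cos a * cos b) / (sin a * sin b)).
have sab : 0 < sin a * sin b by apply: mulr_gt0.
split; last by field; rewrite !gt_eqF.
set u := f + (- ip f g)%:C%C *: g.
set v := f' + (- ip f' g)%:C%C *: g.
have := CS u v.
rewrite /u /v !ipDl !ipDr !ipZl !ipZr hf hf' hg (ipC g f) (ipC g f').
have s2a := sin2cos2 a; have s2b := sin2cos2 b.
rewrite ca in s2a; rewrite cb in s2b.
move=> hcs.
set c := (_ / _).
have hc : c * (sin a * sin b) = ip f f' - cos a * cos b by rewrite /c divfK // gt_eqF.
rewrite ca cb in hc.
have : (c * (sin a * sin b)) ^+ 2 <= (sin a * sin b) ^+ 2.
  rewrite hc exprMn s2a s2b; nra.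
rewrite exprMn -[X in _ <= X]mul1r => hh.
have : c ^+ 2 <= 1.
  by rewrite -(ler_pM2r (exprn_gt0 2 sab)).
move=> hc2; apply/andP; split; nra.
Qed.
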